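(* If $\mathfrak{p}=\mathfrak{c}$, then every almost disjoint family of size less than $\mathfrak{c}$ can be extended to a Shelah–Stepr\={a}ns MAD family.
   Context: An almost disjoint (AD) family is a family of infinite subsets of $\omega$ with pairwise finite intersections; MAD means maximal AD. $\mathcal{I}(\mathcal{A})$ is the ideal generated by $\mathcal{A}$ and the finite sets. For an ideal $\mathcal{I}$, $(\mathcal{I}^{<\omega})^+$ is the set of $X\subseteq[\omega]^{<\omega}\setminus\{\emptyset\}$ such that every $A\in\mathcal{I}$ is disjoint from some $s\in X$; $\mathcal{I}$ is Shelah–Stepr\={a}ns if for every $X\in(\mathcal{I}^{<\omega})^+$ there is an infinite $Y\subseteq X$ with $\bigcup Y\in\mathcal{I}$; $\mathcal{A}$ is Shelah–Stepr\={a}ns if $\mathcal{I}(\mathcal{A})$ is. $\mathfrak{p}$ is the pseudointersection number, $\mathfrak{c}=2^{\aleph_0}$. *)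

(* Defs.v *)
From HB Require Import structures.
From mathcomp Require Import all_boot.
From mathcomp Require Import boolp classical_sets functions cardinality.
Set Implicit Arguments. Unset Strict Implicit. Unset Printing Implicit Defensive.
Local Open Scope classical_set_scope.
Local Open Scope card_scope.

Definition almost_disjoint (A : set (set nat)) : Prop :=
  (forall a, A a -> infinite_set a) /\
  (forall a b, A a -> A b -> a <> b -> finite_set (a `&` b)).

Definition MAD (A : set (set nat)) : Prop :=
  almost_disjoint A /\
  (forall B, almost_disjoint B -> A `<=` B -> B = A).

(* I(A): the ideal generated by A and the finite sets: X is in I(A) iff
   X is contained, up to a finite set, in the union of finitely many
   members of A. *)
Definition idealGen (A : set (set nat)) (X : set nat) : Prop :=
  exists S : set (set nat), finite_set S /\ S `<=` A /\
    finite_set (X `\` \bigcup_(a in S) a).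

(* (I^{<omega})^+ for an ideal I given as a predicate on subsets of omega. *)
Definition fin_pos (I : set (set nat) ) (X : set (set nat)) : Prop :=
  (forall s, X s -> finite_set s /\ s !=set0) /\
  (forall B, I B -> exists2 s, X s & s `&` B = set0).

Definition shelah_steprans_ideal (I : set (set nat)) : Prop :=
  forall X, fin_pos I X ->
    exists Y : set (set nat), Y `<=` X /\ infinite_set Y /\
      I (\bigcup_(s in Y) s).

Definition shelah_steprans (A : set (set nat)) : Prop :=
  shelah_steprans_ideal (idealGen A).

Definition SFIP (F : set (set nat)) : Prop :=
  forall S : set (set nat), finite_set S -> S `<=` F -> S !=set0 ->
    infinite_set (\bigcap_(a in S) a).

Definition pseudointersection (F : set (set nat)) (P : set nat) : Prop :=
  infinite_set P /\ forall a, F a -> finite_set (P `\` a).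

(* Families witnessing the definition of p: subsets of [omega]^omega with SFIP
   and no pseudointersection. *)
Definition p_witness (F : set (set nat)) : Prop :=
  (forall a, F a -> infinite_set a) /\ SFIP F /\
  ~ (exists P, pseudointersection F P).

(* p = c : c = 2^aleph0 = |P(omega)| = |[set: set nat]|.  p is the least
   cardinality of a witness family; p = c says some witness has size <= c
   and every witness has size >= c. *)
Definition p_eq_c : Prop :=
  (exists F, p_witness F /\ F #<= [set: set nat]) /\
  (forall F, p_witness F -> [set: set nat] #<= F).

Definition card_lt_c (A : set (set nat)) : Prop :=
  A #<= [set: set nat] /\ ~ ([set: set nat] #<= A).

(* Main.v *)
Require Import Defs.
From mathcomp Require Import all_boot.
From mathcomp Require Import boolp classical_sets functions cardinality wochoice.
From Stdlib Require Import ClassicalEpsilon.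
Set Implicit Arguments. Unset Strict Implicit. Unset Printing Implicit Defensive.
Local Open Scope classical_set_scope.
Local Open Scope card_scope.

Definition SN := set nat.

Lemma card_le_of_inj (A : set SN) (C : set SN) (g : SN -> SN) :
  (forall x, A x -> C (g x)) -> {in A &, injective g} -> A #<= C.
Proof.
move=> hC hi.
have: $|{injfun A >-> C}| by apply/injfunPex; exists g.
by case=> F; apply/pcard_leP; squash F.
Qed.

Lemma inj_of_card_le (C : set SN) :
  [set: SN] #<= C -> exists g : SN -> SN, (forall x, C (g x)) /\ injective g.
Proof.
move=> /pcard_leP h; have := h; move/injfunPex => [g hf hi].
exists g; split; first by move=> x; apply: hf.
by move=> x y e; apply: hi => //; rewrite in_setE.
Qed.

Definition spair (x y : SN) : SN := fun n => if odd n then y n./2 else x n./2.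

Lemma spair_inj x y x' y' : spair x y = spair x' y' -> x = x' /\ y = y'.
Proof.
move=> e; split; apply: funext => n.
- have := congr1 (fun f => f n.*2) e; rewrite /spair /= odd_double doubleK //.
- have := congr1 (fun f => f n.*2.+1) e; rewrite /spair /= odd_double /=.
  by rewrite uphalf_double.
Qed.

Lemma card_union (A1 A2 C : set SN) (f1 f2 : SN -> SN) :
  C `<=` f1 @` A1 `|` f2 @` A2 -> [set: SN] #<= C ->
  [set: SN] #<= A1 \/ [set: SN] #<= A2.
Proof.
move=> sub /inj_of_card_le [g [gC gi]].
have [h|h] := EM (forall y, exists xa : SN * SN, A1 xa.2 /\ f1 xa.2 = g (spair xa.1 y)).
  left; have [k hk] := boolp.choice h.
  apply: (@card_le_of_inj _ _ (fun y => (k y).2)).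
    by move=> y _; case: (hk y).
  move=> y y' _ _ e; have [_ e1] := hk y; have [_ e2] := hk y'.
  by have [] := spair_inj (gi _ _ (etrans (esym e1) (etrans (congr1 f1 e) e2))).
right; move/existsNP: h => [y hy].
have h2 : forall x, exists a, A2 a /\ f2 a = g (spair x y).
  move=> x; have [[a A1a ea]|[a A2a ea]] := sub _ (gC (spair x y)).
    by exfalso; apply: hy; exists (x, a).
  by exists a.
have [k hk] := boolp.choice h2.
apply: (@card_le_of_inj _ _ k); first by move=> x _; case: (hk x).
move=> x x' _ _ e; have [_ e1] := hk x; have [_ e2] := hk x'.
by have [] := spair_inj (gi _ _ (etrans (esym e1) (etrans (congr1 f2 e) e2))).
Qed.

Lemma cantor : ~ ([set: SN] #<= [set: nat]).
Proof.
move/pcard_leP/injfunPex => [f _ fi].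
pose D : SN := fun n => exists z : SN, f z = n /\ ~ z n.
have key : D (f D) <-> ~ D (f D).
  split.
    move=> [z [e nz]]; have ez : z = D := fi _ _ (in_setT _) (in_setT _) e.
    by move: nz; rewrite ez.
  by move=> nD; exists D.
by have := key; tauto.
Qed.


Lemma wo_index : exists (lt : SN -> SN -> Prop) (j : SN -> SN),
  well_founded lt /\ (forall x y, x <> y -> lt x y \/ lt y x) /\ injective j /\
  forall Z, ~ ([set: SN] #<= [set u | lt u (j Z)]).
Proof.
have [R Rwo] := (@well_ordering_principle SN).
have Rwc : wo_chain R predT by move=> A _; exact: Rwo.
have Rtot := wo_chainW Rwc.
have Ranti := wo_chain_antisymmetric Rwc.
have minP : forall P : SN -> Prop, (exists x, P x) -> exists m, P m /\ forall y, P y -> R m y.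
  move=> P [x Px].
  have [|m [[Pm lbm] _]] := Rwo (fun t => `[< P t >]).
    by exists x; rewrite unfold_in; apply/asboolP.
  exists m; split; first by move: Pm; rewrite unfold_in => /asboolP.
  by move=> y Py; apply: lbm; rewrite unfold_in; apply/asboolP.
pose lt x y := R x y /\ x <> y.
have anti : forall x y, R x y -> R y x -> x = y.
  by move=> x y h1 h2; apply: Ranti => //; rewrite h1 h2.
exists lt.
have wf : well_founded lt.
  move=> x; apply: contrapT => nx.
  have [m [nm mmin]] := minP (fun t => ~ Acc lt t) (ex_intro _ x nx).
  apply: nm; constructor => y [Rym ne]; apply: contrapT => ny.
  by apply: ne; apply: anti => //; apply: mmin.
have tot : forall x y, x <> y -> lt x y \/ lt y x.
  move=> x y ne; have := Rtot x y isT isT; case/orP => h.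
    by left; split => // e; apply: ne.
  by right; split => // e; apply: ne.
have [hall|hex] := EM (forall t, ~ ([set: SN] #<= [set u | lt u t])).
  by exists id; split; [|split; [|split]] => // x y.
move/existsNP: hex => hex.
have [t0 [big0 min0]] := minP _ hex.
move/contrapT: big0 => /inj_of_card_le [j [jC ji]].
exists j; do 3 split => //.
move=> Z bigZ; have := min0 (j Z) (fun h => h bigZ).
move=> h; case: (jC Z) => h1 h2; apply: h2; exact: anti.
Qed.

Lemma finite_setU2 T (A B : set T) : finite_set A -> finite_set B -> finite_set (A `|` B).
Proof. by move=> hA hB; rewrite finite_setU. Qed.

Lemma ideal_avoid (B' X : set SN) C : fin_pos (idealGen B') X -> idealGen B' C ->
  infinite_set [set s | X s /\ s `&` C = set0].
Proof.
move=> [hfin hpos] [S0 [S0fin [S0B Cfin]]] Wfin.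
set W := [set s | X s /\ s `&` C = set0] in Wfin.
have Ufin : finite_set (\bigcup_(s in W) s).
  by apply: bigcup_finite => // s [Xs _]; case: (hfin s Xs).
have : idealGen B' (C `|` \bigcup_(s in W) s).
  exists S0; split; [|split] => //.
  apply: (sub_finite_set (B := (C `\` \bigcup_(a in S0) a) `|` \bigcup_(s in W) s)).
    by move=> x [[Cx|Wx] nx]; [left|right].
  exact: finite_setU2.
move/hpos => [s Xs e].
have sC : s `&` C = set0.
  apply/seteqP; split => // x [sx Cx].
  have : (s `&` (C `|` \bigcup_(s in W) s)) x by split => //; left.
  by rewrite e.
have [_ [x sx]] := hfin s Xs.
have : (s `&` (C `|` \bigcup_(s in W) s)) x by split => //; right; exists s.
by rewrite e.
Qed.

Lemma code_ex : exists code : SN -> nat,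
  forall s s', finite_set s -> finite_set s' -> code s = code s' -> s = s'.
Proof.
have := countable_finite_subset (countableP [set: nat]).
move/pcard_injP => [f hf]; exists f => s s' fs fs' e.
by apply: hf => //; rewrite in_setE.
Qed.

Lemma fin_countable : [set b : SN | finite_set b] #<= [set: nat].
Proof.
apply: card_le_trans (countable_finite_subset (countableP [set: nat])).
by apply: subset_card_le => b fb; split.
Qed.

Lemma key (hp : forall F, p_witness F -> [set: SN] #<= F) (B' X : set SN) :
  ~ ([set: SN] #<= B') -> fin_pos (idealGen B') X ->
  exists a : SN, infinite_set a /\ (forall b, B' b -> finite_set (a `&` b)) /\
    exists Y, Y `<=` X /\ infinite_set Y /\ a = \bigcup_(s in Y) s.
Proof.
move=> Bsmall hX.
have [code hcode] := code_ex.
have Xfin : forall s, X s -> finite_set s by move=> s Xs; case: hX => h _; case: (h s Xs).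
have codefin : forall W, W `<=` X -> finite_set (code @` W) -> finite_set W.
  move=> W WX; rewrite (eq_finite_set (inj_card_eq _)) //.
  by move=> s s'; rewrite !in_setE => Ws Ws'; apply: hcode; apply: Xfin; apply: WX.
pose Xb (b : SN) := [set s | X s /\ s `&` b = set0].
pose D := B' `|` [set b : SN | finite_set b].
pose phi b := code @` Xb b.
pose G := phi @` D.
have inI : forall b, D b -> idealGen B' b.
  move=> b [Bb|Fb].
    exists [set b]; split; first exact: finite_set1.
    split; first by move=> x ->.
    by rewrite bigcup_set1 setDv; exact: finite_set0.
  exists set0; split; first exact: finite_set0.
  by split => //; rewrite bigcup_set0 setD0.
have Xbinf : forall C, idealGen B' C -> infinite_set (code @` Xb C).
  move=> C hC fin; apply: (ideal_avoid hX hC); apply: codefin => //.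
  by move=> s [].
have Gsmall : ~ ([set: SN] #<= G).
  move=> h; have [] := card_union (A1 := B') (A2 := [set b | finite_set b])
     (f1 := phi) (f2 := phi) _ h.
  - by move=> _ [b [Bb|Fb] <-]; [left|right]; exists b.
  - exact: Bsmall.
  - by move=> h2; apply: cantor; apply: card_le_trans h2 fin_countable.
have [P [Pinf Psub]] : exists P, pseudointersection G P.
  apply: contrapT => nP; apply: Gsmall; apply: hp; split; [|split] => //.
  - by move=> _ [b Db <-]; apply: Xbinf; exact: inI.
  move=> S Sfin SG Sne.
  have [g hg] : {g & forall s, S s -> D (g s) /\ phi (g s) = s}.
    apply: (@boolp.choice _ _ (fun s b => S s -> D b /\ phi b = s)) => s; have [Ss|nS] := EM (S s); last by exists set0.
    by have [b Db e] := SG s Ss; exists b.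
  pose C := \bigcup_(s in S) g s.
  have hC : idealGen B' C.
    exists (g @` S `&` B'); split; first by apply: finite_setIl; exact: finite_image.
    split; first exact: subIsetr.
    apply: (sub_finite_set (B := \bigcup_(s in [set s | S s /\ finite_set (g s)]) g s)).
      move=> x [[s Ss gx] nx]; exists s => //; split => //.
      have [[Bg|Fg] _] := hg s Ss => //.
      by exfalso; apply: nx; exists (g s) => //; split => //; exists s.
    apply: bigcup_finite; last by move=> s [].
    by apply: sub_finite_set Sfin => s [].
  apply: sub_infinite_set (Xbinf C hC).
  move=> _ [s0 [Xs0 e0] <-] s Ss; have [Dg eg] := hg s Ss; rewrite -eg.
  exists s0 => //; split => //.
  apply/seteqP; split => // x [s0x gx]; rewrite -e0; split => //; exists s => //.
have PsubG : forall b, D b -> finite_set (P `\` phi b).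
  by move=> b Db; apply: Psub; exists b.
pose Y := [set s | X s /\ P (code s)].
have YX : Y `<=` X by move=> s [].
have Yinf : infinite_set Y.
  move=> Yfin; apply: Pinf.
  apply: (sub_finite_set (B := (P `\` phi set0) `|` code @` Y)).
    move=> x Px; have [h|h] := EM (phi set0 x); last by left.
    by right; case: h => s [Xs _] e; exists s => //; split => //; rewrite e.
  apply: finite_setU2; last exact: finite_image.
  by apply: PsubG; right; exact: finite_set0.
exists (\bigcup_(s in Y) s); split; last split; last by exists Y.
  move=> afin; apply: Yinf; apply: codefin => //.
  apply: sub_finite_set (PsubG _ (or_intror afin)).
  move=> _ [s [Xs Ps] <-]; split => // -[s' [Xs' e'] ec].
  have ss : s' = s by apply: hcode => //; apply: Xfin.
  have [_ [x sx]] : finite_set s /\ s !=set0 by case: hX => h _; apply: h.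
  have : (s' `&` \bigcup_(s in Y) s) x by rewrite ss; split => //; exists s.
  by rewrite e'.
move=> b Bb.
pose Yb := [set s | Y s /\ s `&` b !=set0].
apply: (sub_finite_set (B := \bigcup_(s in Yb) s)).
  by move=> x [[s Ys sx] bx]; exists s => //; split => //; exists x.
apply: bigcup_finite; last by move=> s [[Xs _] _]; apply: Xfin.
apply: codefin; first by move=> s [[]].
apply: sub_finite_set (PsubG _ (or_introl Bb)).
move=> _ [s [[Xs Ps] ne] <-]; split => // -[s' [Xs' e'] ec].
have ss : s' = s by apply: hcode => //; apply: Xfin.
by case: ne => x; rewrite -ss e'.
Qed.

Lemma mad_of_ss (B : set SN) : almost_disjoint B -> shelah_steprans B -> MAD B.
Proof.
move=> hB hss; split => // C hC BC.
apply/seteqP; split => // x Cx; apply: contrapT => nBx.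
have [Cinf Cad] := hC.
have xinf := Cinf x Cx.
have xb : forall b, B b -> finite_set (x `&` b).
  move=> b Bb; apply: Cad => //; first exact: BC.
  by move=> e; apply: nBx; rewrite e.
pose X := [set s : SN | exists2 n, x n & s = [set n]].
have hX : fin_pos (idealGen B) X.
  split.
    by move=> _ [n xn ->]; split; [exact: finite_set1 | exists n].
  move=> E [S0 [S0fin [S0B Efin]]].
  have : infinite_set (x `\` E).
    move=> fin; apply: xinf.
    apply: (sub_finite_set (B := (x `\` E) `|` ((\bigcup_(b in S0) (x `&` b)) `|` (E `\` \bigcup_(a in S0) a)))).
      move=> n xn; have [En|nE] := EM (E n); last by left.
      right; have [h|h] := EM ((\bigcup_(a in S0) a) n); last by right.
      by left; case: h => b S0b bn; exists b.
    apply: finite_setU2 => //; apply: finite_setU2 => //.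
    by apply: bigcup_finite => // b S0b; apply: xb; exact: S0B.
  move=> /infinite_setN0 [n [xn nE]]; exists [set n]; first by exists n.
  by apply/seteqP; split => // m [-> En]; exact: nE.
have [Y [YX [Yinf hY]]] := hss X hX.
case: hY => S1 [S1fin [S1B Ufin]].
have Uinf : infinite_set (\bigcup_(s in Y) s).
  move=> fin; apply: Yinf.
  apply: (sub_finite_set (B := (fun n => [set n]) @` (\bigcup_(s in Y) s))); last exact: finite_image.
  move=> s Ys; have [n xn e] := YX s Ys; exists n; last by rewrite e.
  by exists s => //; rewrite e.
apply: Uinf.
apply: (sub_finite_set (B := (\bigcup_(s in Y) s `\` \bigcup_(a in S1) a) `|` \bigcup_(b in S1) (x `&` b))).
  move=> n Un; have [h|h] := EM ((\bigcup_(a in S1) a) n); last by left.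
  right; case: h => b S1b bn; exists b => //; split => //.
  case: Un => s Ys sn; have [m xm e] := YX s Ys; move: sn; rewrite e => sn.
  by rewrite sn.
apply: finite_setU2 => //; apply: bigcup_finite => // b S1b; apply: xb; exact: S1B.
Qed.

Definition good (Bc X : set SN) (a : SN) := infinite_set a /\
  (forall b, Bc b -> finite_set (a `&` b)) /\
  exists Y, Y `<=` X /\ infinite_set Y /\ a = \bigcup_(s in Y) s.

Definition Pr (Bc X : set SN) (o : option SN) := match o with
  | Some a => good Bc X a
  | None => ~ exists a, good Bc X a end.

Theorem mainTheorem9 :
  p_eq_c ->
  forall A : set (set nat), almost_disjoint A -> card_lt_c A ->
  exists B : set (set nat), A `<=` B /\ MAD B /\ shelah_steprans B.
Proof.
move=> [_ hp] A hA [_ Asmall].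
have [code hcode] := code_ex.
have [lt [j [wf [tot [ji jsmall]]]]] := wo_index.
pose Xof (t : SN) : set SN := [set s | finite_set s /\ exists Z, j Z = t /\ Z (code s)].
pose Bof (t : SN) (prev : forall u, lt u t -> option SN) : set SN :=
  A `|` [set a | exists u (h : lt u t), prev u h = Some a].
pose F (t : SN) (prev : forall u, lt u t -> option SN) : option SN :=
  epsilon (inhabits None) (Pr (Bof t prev) (Xof t)).
pose f := Fix wf (fun _ => option SN) F.
have fE : forall t, f t = F t (fun u _ => f u).
  move=> t; rewrite /f Fix_eq // => x g1 g2 h.
  have -> // : g1 = g2.
  apply: functional_extensionality_dep => y.
  by apply: functional_extensionality_dep => p; apply: h.
pose Bt t := A `|` [set a | exists u, lt u t /\ f u = Some a].
have Btdef : forall t, Bof t (fun u _ => f u) = Bt t.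
  move=> t; apply/seteqP; split => a.
    by case=> [Aa|[u [h e]]]; [left | right; exists u].
  by case=> [Aa|[u [h e]]]; [left | right; exists u, h].
have fspec : forall t, Pr (Bt t) (Xof t) (f t).
  move=> t; rewrite fE /F -Btdef; apply: epsilon_spec.
  have [[a ha]|na] := EM (exists a, good (Bof t (fun u _ => f u)) (Xof t) a).
    by exists (Some a).
  by exists None.
have Btsmall : forall Z, ~ ([set: SN] #<= Bt (j Z)).
  move=> Z h; have [] := card_union (A1 := A) (A2 := [set u | lt u (j Z)])
    (f1 := id) (f2 := fun u => odflt set0 (f u)) _ h.
  - move=> a [Aa|[u [h1 e]]]; first by left; exists a.
    by right; exists u => //; rewrite e.
  - exact: Asmall.
  - exact: jsmall.
pose B := A `|` [set a | exists u, f u = Some a].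
have Btsub : forall t, Bt t `<=` B.
  by move=> t a [Aa|[u [_ e]]]; [left|right; exists u].
have addinf : forall u a, f u = Some a -> good (Bt u) (Xof u) a.
  by move=> u a e; have := fspec u; rewrite e.
have hAD : almost_disjoint B.
  case: hA => Ainf Aad.
  split.
    by move=> a [Aa|[u e]]; [exact: Ainf | case: (addinf _ _ e)].
  move=> a b [Aa|[u ea]] [Ab|[v eb]] ne.
  - exact: Aad.
  - by have [_ [h _]] := addinf _ _ eb; rewrite setIC; apply: h; left.
  - by have [_ [h _]] := addinf _ _ ea; apply: h; left.
  - have uv : u <> v.
      by move=> e; subst v; apply: ne; rewrite ea in eb; case: eb.
    case: (tot u v uv) => l.
    + by have [_ [h _]] := addinf _ _ eb; rewrite setIC; apply: h; right; exists u.
    + by have [_ [h _]] := addinf _ _ ea; apply: h; right; exists v.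
have hSS : shelah_steprans B.
  move=> X hX.
  have Xfin : forall s, X s -> finite_set s by case: hX => h _ s Xs; case: (h s Xs).
  pose Z := code @` X.
  have XZ : Xof (j Z) = X.
    apply/seteqP; split.
    - move=> s [fs [Z' [e Zs]]]; have eZ := ji _ _ e; rewrite eZ in Zs.
      case: Zs => s' Xs' ec.
      by rewrite -(hcode _ _ (Xfin _ Xs') fs ec).
    - move=> s Xs; split; first exact: Xfin.
      by exists Z; split => //; exists s.
  have hX' : fin_pos (idealGen (Bt (j Z))) X.
    case: hX => h1 h2; split => // E [S0 [S0f [S0B Ef]]]; apply: h2.
    exists S0; split => //; split => //; exact: subset_trans S0B (Btsub _).
  have [a ha] := key hp (Btsmall Z) hX'.
  have := fspec (j Z); case E : (f (j Z)) => [a'|] /=.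
    move=> [_ [_ [Y [YX [Yinf ea]]]]]; rewrite XZ in YX.
    exists Y; split => //; split => //.
    exists [set a']; split; first exact: finite_set1.
    split; first by move=> x ->; right; exists (j Z).
    by rewrite bigcup_set1 -ea setDv; exact: finite_set0.
  by move=> nex; exfalso; apply: nex; exists a; rewrite XZ.
exists B; split; first by move=> a Aa; left.
by split; [exact: mad_of_ss | exact: hSS].
Qed.
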